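(* Suppose $1/n\ll\varepsilon_3\ll\varepsilon_4\ll\eta_2\ll1$. Let $G$ be a digraph on $n$ vertices with $\delta^0(G)\geq n/2$ and let $A,B,S,T$ be a partition of $V(G)$ satisfying the $ST$-conditions, with sizes $a,b,s,t$. Then: (i) if $a=b\in\{0,1\}$, then for any choice of $(X_1,Y_1),(X_2,Y_2)\in\{(S,T),(T,S)\}$ there are two vertex-disjoint edges $e_1\in E(X_1,Y_1)$ and $e_2\in E(X_2,Y_2)$; (ii) if $A=\emptyset$, then there are two vertex-disjoint edges in $E(T,S)$; (iii) if $a=1$ and $b\geq 2$, then there are two vertex-disjoint edges in $E(T,S)$; (iv) there are two vertex-disjoint edges in $E(S,T\cup A)\cup E(T,S\cup B)$.
   Context: Digraphs have no loops and at most one edge in each direction between two vertices; $\delta^0$ is the minimum semidegree; $E(X,Y)$ is the set of edges $xy$ with $x\in X$, $y\in Y$; $d^+_X(x)=|N^+(x)\cap X|$, $d^-_X(x)=|N^-(x)\cap X|$, and $d^\pm_X(x)\geq c$ means both are $\geq c$; $G[X]$ is the induced subdigraph. The $ST$-conditions on a partition $A,B,S,T$ of sizes $a,b,s,t$: $a\leq b$, $s\leq t$; $\lfloor n/2\rfloor-\varepsilon_3n\leq s,t\leq\lceil n/2\rceil+\varepsilon_3 n$; $\delta^0(G[S]),\delta^0(G[T])\geq\eta_2 n$; $d^\pm_S(x)\geq n/2-\varepsilon_3n$ for all but at most $\varepsilon_3 n$ vertices $x\in S$; $d^\pm_T(x)\geq n/2-\varepsilon_3n$ for all but at most $\varepsilon_3n$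 vertices $x\in T$; $a+b\leq\varepsilon_3 n$; for all $x\in A$: $d^-_T(x),d^+_S(x)>n/2-3\eta_2n$ and $d^-_S(x),d^+_T(x)\leq 3\eta_2 n$; for all $x\in B$: $d^-_S(x),d^+_T(x)>n/2-3\eta_2 n$ and $d^-_T(x),d^+_S(x)\leq 3\eta_2 n$. The hierarchy $\alpha\ll\beta$ means $\alpha$ is sufficiently small as a function of $\beta$. *)

(* Defs.v *)
From HB Require Import structures.
From mathcomp Require Import all_boot all_order all_algebra.
Set Implicit Arguments. Unset Strict Implicit. Unset Printing Implicit Defensive.
Import Order.TTheory GRing.Theory Num.Theory.
Local Open Scope ring_scope.

(* A digraph: no loops; a relation automatically has at most one edge
   in each direction between two vertices. *)
Definition loopless (V : finType) (E : rel V) : Prop := forall x, ~~ E x x.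

Definition outdeg_in (V : finType) (E : rel V) (X : {set V}) (x : V) : nat :=
  #|[set y in X | E x y]|.
Definition indeg_in (V : finType) (E : rel V) (X : {set V}) (x : V) : nat :=
  #|[set y in X | E y x]|.

Definition min_semideg_ge (R : realFieldType) (V : finType) (E : rel V) (c : R) : Prop :=
  forall x : V, c <= (outdeg_in E setT x)%:R /\ c <= (indeg_in E setT x)%:R.

Definition partition4 (V : finType) (A B S T : {set V}) : Prop :=
  A :|: B :|: S :|: T = setT /\
  [&& [disjoint A & B], [disjoint A & S], [disjoint A & T],
      [disjoint B & S], [disjoint B & T] & [disjoint S & T]].

Definition ST_conditions (R : realFieldType) (V : finType) (E : rel V) (n : nat)
    (eps3 eta2 : R) (A B S T : {set V}) : Prop :=
  let nr : R := n%:R in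
  partition4 A B S T /\
  (#|A| <= #|B|)%N /\ (#|S| <= #|T|)%N /\
  ((n./2)%:R - eps3 * nr <= #|S|%:R /\ #|S|%:R <= (uphalf n)%:R + eps3 * nr) /\
  ((n./2)%:R - eps3 * nr <= #|T|%:R /\ #|T|%:R <= (uphalf n)%:R + eps3 * nr) /\
  (forall x, x \in S -> eta2 * nr <= (outdeg_in E S x)%:R /\
                        eta2 * nr <= (indeg_in E S x)%:R) /\
  (forall x, x \in T -> eta2 * nr <= (outdeg_in E T x)%:R /\
                        eta2 * nr <= (indeg_in E T x)%:R) /\
  #|[set x in S | ~~ ((nr / 2 - eps3 * nr <= (outdeg_in E S x)%:R) &&
                      (nr / 2 - eps3 * nr <= (indeg_in E S x)%:R))]|%:R <= eps3 * nr /\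
  #|[set x in T | ~~ ((nr / 2 - eps3 * nr <= (outdeg_in E T x)%:R) &&
                      (nr / 2 - eps3 * nr <= (indeg_in E T x)%:R))]|%:R <= eps3 * nr /\
  (#|A| + #|B|)%:R <= eps3 * nr /\
  (forall x, x \in A ->
     [/\ nr / 2 - 3 * eta2 * nr < (indeg_in E T x)%:R,
         nr / 2 - 3 * eta2 * nr < (outdeg_in E S x)%:R,
         (indeg_in E S x)%:R <= 3 * eta2 * nr &
         (outdeg_in E T x)%:R <= 3 * eta2 * nr]) /\
  (forall x, x \in B ->
     [/\ nr / 2 - 3 * eta2 * nr < (indeg_in E S x)%:R,
         nr / 2 - 3 * eta2 * nr < (outdeg_in E T x)%:R,
         (indeg_in E T x)%:R <= 3 * eta2 * nr &
         (outdeg_in E S x)%:R <= 3 * eta2 * nr]).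

Definition edge_in (V : finType) (E : rel V) (X Y : {set V}) (x y : V) : bool :=
  [&& E x y, x \in X & y \in Y].

Definition two_disjoint_edges (V : finType) (P1 P2 : V -> V -> bool) : Prop :=
  exists u1 v1 u2 v2 : V,
    [/\ P1 u1 v1, P2 u2 v2 & [disjoint [set u1; v1] & [set u2; v2]]].

(* Main.v *)
Require Import Defs.
From HB Require Import structures.
From mathcomp Require Import all_boot all_order all_algebra.
From mathcomp Require Import zify ring lra.
Import Order.TTheory GRing.Theory Num.Theory.
Set Implicit Arguments. Unset Strict Implicit. Unset Printing Implicit Defensive.

Section Basic.
Variable V : finType.
Implicit Types (E : rel V) (X Y Z : {set V}).

Lemma outdeg_rev E X x : outdeg_in (fun a b => E b a) X x = indeg_in E X x.
Proof. by []. Qed.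
Lemma indeg_rev E X x : indeg_in (fun a b => E b a) X x = outdeg_in E X x.
Proof. by []. Qed.

Lemma outdeg_le E X x : (outdeg_in E X x <= #|X|)%N.
Proof. by apply: subset_leq_card; apply/subsetP=> y; rewrite inE => /andP[]. Qed.
Lemma indeg_le E X x : (indeg_in E X x <= #|X|)%N.
Proof. by apply: subset_leq_card; apply/subsetP=> y; rewrite inE => /andP[]. Qed.

Lemma outdeg_le1 E X x : loopless E -> x \in X -> (outdeg_in E X x <= #|X| - 1)%N.
Proof.
move=> hl hx; rewrite (cardsD1 x X) hx /= add1n subn1 /=.
apply: subset_leq_card; apply/subsetP=> y; rewrite !inE => /andP[-> hy].
by rewrite andbT; apply/eqP=> e; move: hy; rewrite e (negbTE (hl x)).
Qed.
Lemma indeg_le1 E X x : loopless E -> x \in X -> (indeg_in E X x <= #|X| - 1)%N.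
Proof.
move=> hl hx; rewrite (cardsD1 x X) hx /= add1n subn1 /=.
apply: subset_leq_card; apply/subsetP=> y; rewrite !inE => /andP[-> hy].
by rewrite andbT; apply/eqP=> e; move: hy; rewrite e (negbTE (hl x)).
Qed.

Lemma outdeg_U E X Y x : (outdeg_in E (X :|: Y) x <= outdeg_in E X x + outdeg_in E Y x)%N.
Proof.
rewrite /outdeg_in; have -> : [set y in X :|: Y | E x y] =
  [set y in X | E x y] :|: [set y in Y | E x y].
  by apply/setP=> y; rewrite !inE andb_orl.
exact: leq_card_setU.
Qed.
Lemma indeg_U E X Y x : (indeg_in E (X :|: Y) x <= indeg_in E X x + indeg_in E Y x)%N.
Proof. exact: (@outdeg_U (fun a b => E b a)). Qed.

Lemma outdeg_sub E X Y x : X \subset Y -> (outdeg_in E X x <= outdeg_in E Y x)%N.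
Proof.
move=> /subsetP h; apply: subset_leq_card; apply/subsetP=> y.
by rewrite !inE => /andP[/h -> ->].
Qed.

Lemma markov (X : {set V}) (P : pred V) (f : V -> nat) th :
  (forall x, x \in X -> P x -> (th <= f x)%N) ->
  (#|[set x in X | P x]| * th <= \sum_(x in X) f x)%N.
Proof.
move=> h; rewrite -sum_nat_const big_mkcond [X in (_ <= X)%N]big_mkcond.
apply: leq_sum => x _; rewrite inE; case hx: (x \in X) => //=.
by case hp: (P x) => //; apply: h.
Qed.

Lemma card_sum (W : {set V}) (g : V -> bool) :
  #|[set w in W | g w]| = \sum_(w in W) (g w : nat).
Proof.
rewrite -sum1_card big_mkcond [RHS]big_mkcond; apply: eq_bigr => w _.
by rewrite inE; case: (w \in W); case: (g w).
Qed.

Lemma dcount E X Z : \sum_(x in X) indeg_in E Z x = \sum_(z in Z) outdeg_in E X z.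
Proof.
rewrite /indeg_in /outdeg_in.
under eq_bigr do rewrite card_sum.
rewrite exchange_big /=.
by apply: eq_bigr => z _; rewrite card_sum.
Qed.

Lemma disj4 (u1 v1 u2 v2 : V) : u1 != u2 -> v1 != v2 -> u1 != v2 -> v1 != u2 ->
  [disjoint [set u1; v1] & [set u2; v2]].
Proof.
move=> h1 h2 h3 h4; rewrite disjoints_subset; apply/subsetP=> z; rewrite !inE.
by case/orP=> /eqP-> ; rewrite negb_or ?h1 ?h2 ?h3 ?h4.
Qed.

Lemma neq_disj (P Q : {set V}) x y : [disjoint P & Q] -> x \in P -> y \in Q -> x != y.
Proof. move=> h xP yQ; apply/eqP=> e; move: (disjointFr h xP); by rewrite e yQ. Qed.

Lemma tailP E (P Q : {set V}) x : x \in [set x in P | (0 < outdeg_in E Q x)%N] ->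
  exists y, edge_in E P Q x y.
Proof.
rewrite inE => /andP[xP /card_gt0P [y]]; rewrite inE => /andP[yQ exy].
by exists y; rewrite /edge_in exy xP yQ.
Qed.
Lemma headP E (P Q : {set V}) y : y \in [set y in Q | (0 < indeg_in E P y)%N] ->
  exists x, edge_in E P Q x y.
Proof.
rewrite inE => /andP[yQ /card_gt0P [x]]; rewrite inE => /andP[xP exy].
by exists x; rewrite /edge_in exy xP yQ.
Qed.

Lemma edge_inP E (P Q : {set V}) x y : edge_in E P Q x y -> x \in P /\ y \in Q.
Proof. by case/and3P. Qed.

Lemma bip E (P Q : {set V}) : [disjoint P & Q] ->
  (1 < #|[set x in P | (0 < outdeg_in E Q x)%N]|)%N ->
  (1 < #|[set y in Q | (0 < indeg_in E P y)%N]|)%N ->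
  two_disjoint_edges (edge_in E P Q) (edge_in E P Q).
Proof.
move=> hPQ /card_gt1P [x1 [x2 [/tailP [y1 e1] /tailP [y2 e2] n12]]].
move=> /card_gt1P [h1 [h2 [/headP [a1 f1] /headP [a2 f2] m12]]].
have [x1P y1Q] := edge_inP e1; have [x2P y2Q] := edge_inP e2.
have [a1P h1Q] := edge_inP f1; have [a2P h2Q] := edge_inP f2.
case: (eqVneq y1 y2) => [ey|ny]; last first.
  exists x1, y1, x2, y2; split => //; apply: disj4 => //.
    exact: (neq_disj hPQ). by rewrite eq_sym (neq_disj hPQ).
subst y2.
have [a [h [fa nh]]] : exists a h, edge_in E P Q a h /\ h != y1.
  case: (eqVneq h1 y1) => [e|n]; last by exists a1, h1.
  by exists a2, h2; split => //; rewrite -e eq_sym.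
have [aP hQ] := edge_inP fa.
case: (eqVneq a x1) => [ea|na].
  subst a; exists x1, h, x2, y1; split => //; apply: disj4 => //.
    exact: (neq_disj hPQ). by rewrite eq_sym (neq_disj hPQ).
exists a, h, x1, y1; split => //; apply: disj4 => //.
  exact: (neq_disj hPQ). by rewrite eq_sym (neq_disj hPQ).
Qed.

Lemma fan E (P Q : {set V}) x1 x2 : [disjoint P & Q] -> x1 \in P -> x2 \in P ->
  x1 != x2 -> (1 < outdeg_in E Q x1)%N -> (0 < outdeg_in E Q x2)%N ->
  two_disjoint_edges (edge_in E P Q) (edge_in E P Q).
Proof.
move=> hPQ x1P x2P n12 /card_gt1P [b1 [b2 [hb1 hb2 nb]]] /card_gt0P [y2 hy2].
move: hb1 hb2 hy2; rewrite !inE => /andP[b1Q eb1] /andP[b2Q eb2] /andP[y2Q ey2].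
have [y1 [y1Q ey1 ny]] : exists y1, [/\ y1 \in Q, E x1 y1 & y1 != y2].
  case: (eqVneq b1 y2) => [e|n]; last by exists b1.
  by exists b2; split => //; rewrite -e eq_sym.
exists x1, y1, x2, y2; split; rewrite ?/edge_in ?ey1 ?x1P ?y1Q ?ey2 ?x2P ?y2Q //.
apply: disj4 => //. exact: (neq_disj hPQ). by rewrite eq_sym (neq_disj hPQ).
Qed.

Ltac nd := solve [ done | by rewrite eq_sym |
  match goal with H : is_true [disjoint ?P & ?Q] |- _ =>
    solve [ exact: (neq_disj H) | rewrite eq_sym; exact: (neq_disj H) ] end ].

Lemma mixed_aux E (P1 Q1 P2 Q2 : {set V}) x1 y1 x2 y2 w z w' z' :
  [disjoint P1 & Q1] -> [disjoint P2 & Q2] -> [disjoint P1 & P2] -> [disjoint Q1 & Q2] ->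
  edge_in E P1 Q1 x1 y1 -> edge_in E P1 Q1 x2 y2 -> x1 != x2 ->
  edge_in E P2 Q2 w z -> edge_in E P2 Q2 w' z' -> w != w' -> w != y1 -> w' != y1 ->
  two_disjoint_edges (edge_in E P1 Q1) (edge_in E P2 Q2).
Proof.
move=> d11 d22 d12 dq e1 e2 n12 f f' nw wy w'y.
have [x1P y1Q] := edge_inP e1; have [x2P y2Q] := edge_inP e2.
have [wP zQ] := edge_inP f; have [w'P z'Q] := edge_inP f'.
case: (eqVneq z x1) => [ez|nz]; last first.
  by exists x1, y1, w, z; split => //; apply: disj4; nd.
case: (eqVneq z' x1) => [ez'|nz']; last first.
  by exists x1, y1, w', z'; split => //; apply: disj4; nd.
subst z z'.
case: (eqVneq y2 w) => [ey|ny].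
  subst y2; by exists x2, w, w', x1; split => //; apply: disj4; nd.
by exists x2, y2, w, x1; split => //; apply: disj4; nd.
Qed.

Lemma mixed E (P1 Q1 P2 Q2 : {set V}) :
  [disjoint P1 & Q1] -> [disjoint P2 & Q2] -> [disjoint P1 & P2] -> [disjoint Q1 & Q2] ->
  (1 < #|[set x in P1 | (0 < outdeg_in E Q1 x)%N]|)%N ->
  (2 < #|[set x in P2 | (0 < outdeg_in E Q2 x)%N]|)%N ->
  two_disjoint_edges (edge_in E P1 Q1) (edge_in E P2 Q2).
Proof.
move=> d11 d22 d12 dq /card_gt1P [x1 [x2 [/tailP [y1 e1] /tailP [y2 e2] n12]]].
move=> /card_gt2P [w1 [w2 [w3 [[/tailP [z1 f1] /tailP [z2 f2] /tailP [z3 f3]] [n1 n2 n3]]]]].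
case: (eqVneq w1 y1) => [e1y|n1y].
  subst y1; apply: (mixed_aux d11 d22 d12 dq e1 e2 n12 f2 f3 n2); nd.
case: (eqVneq w2 y1) => [e2y|n2y].
  subst y1; apply: (mixed_aux d11 d22 d12 dq e1 e2 n12 f1 f3 _ n1y); nd.
exact: (mixed_aux d11 d22 d12 dq e1 e2 n12 f1 f2 n1 n1y n2y).
Qed.

Lemma tde_mono (P1 P2 P1' P2' : V -> V -> bool) :
  (forall x y, P1 x y -> P1' x y) -> (forall x y, P2 x y -> P2' x y) ->
  two_disjoint_edges P1 P2 -> two_disjoint_edges P1' P2'.
Proof.
move=> h1 h2 [u1 [v1 [u2 [v2 [p1 p2 d]]]]].
by exists u1, v1, u2, v2; split; [apply: h1 | apply: h2 |].
Qed.
Lemma tde_sym (P1 P2 : V -> V -> bool) :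
  two_disjoint_edges P1 P2 -> two_disjoint_edges P2 P1.
Proof.
move=> [u1 [v1 [u2 [v2 [p1 p2 d]]]]].
by exists u2, v2, u1, v1; split => //; rewrite disjoint_sym.
Qed.
End Basic.

Section Count.
Variable R : realFieldType.
Variable V : finType.
Local Open Scope ring_scope.

Lemma sumK (B : {set V}) (f : V -> nat) (K : R) :
  (forall z, z \in B -> (f z)%:R <= K) -> (\sum_(z in B) f z)%:R <= #|B|%:R * K.
Proof.
move=> h; rewrite natr_sum; apply: le_trans (ler_sum _ h) _.
by rewrite sumr_const mulr_natl.
Qed.

Lemma real_step (N b s : nat) (K : R) : 0 <= K -> 2 * K + 2 < s%:R ->
  ((N * (b + 1))%:R <= 2 * b%:R * K) -> (N + 3 <= s)%N.
Proof.
move=> K0 hs hN; rewrite leqNgt; apply/negP => h.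
have : s%:R <= N%:R + 2 :> R by rewrite -(natrD _ N 2) ler_nat; lia.
move: hN; rewrite natrM natrD => hN hsN.
have b0 : 0 <= b%:R :> R by [].
have : 0 <= b%:R * (N%:R - 2 * K) :> R.
  by apply: mulr_ge0 => //; lra.
nra.
Qed.

Lemma real_step2 (s b a : nat) (K : R) : 0 <= K -> 2 * K + 2 < s%:R ->
  (a <= 1)%N -> (a <= b)%N -> ((s * (b + 1 - a))%:R <= 2 * b%:R * K) -> False.
Proof.
move=> K0 hs ha hab hX.
have h1 : (s * b <= s * (b + 1 - a))%N by apply: leq_mul => //; lia.
have h2 : (s <= s * (b + 1 - a))%N by rewrite -{1}(muln1 s); apply: leq_mul => //; lia.
move: (s * (b + 1 - a))%N h1 h2 hX => X h1 h2 hX.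
move: h1 h2; rewrite -!(ler_nat R) => h1 h2.
case: b hab hX h1 h2 => [|b] hab hX h1 h2.
  by move: hX; rewrite mulr0 mul0r => hX; lra.
move: h1; rewrite natrM => h1.
have hb1 : 0 <= (b.+1)%:R - 1 :> R by rewrite subr_ge0 ler1n.
have hp : 0 <= ((b.+1)%:R - 1) * (s%:R - 2 * K) :> R by apply: mulr_ge0; lra.
nra.
Qed.

Lemma card_split (X : {set V}) (p : pred V) :
  (#|X| <= #|[set x in X | p x]| + #|[set x in X | ~~ p x]|)%N.
Proof.
apply: leq_trans (leq_card_setU _ _); apply: subset_leq_card; apply/subsetP=> x hx.
by rewrite !inE hx /=; case: (p x).
Qed.

Lemma TS_count (E : rel V) (A B S T : {set V}) (n : nat) (K : R) :
  loopless E ->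
  n = (#|A| + #|B| + #|S| + #|T|)%N ->
  (forall x, n <= 2 * (outdeg_in E A x + outdeg_in E B x + outdeg_in E S x + outdeg_in E T x))%N ->
  (forall x, n <= 2 * (indeg_in E A x + indeg_in E B x + indeg_in E S x + indeg_in E T x))%N ->
  (#|A| <= 1)%N -> (#|A| <= #|B|)%N -> (#|S| <= #|T|)%N ->
  0 <= K ->
  (forall z, z \in B -> (outdeg_in E S z)%:R <= K) ->
  (forall z, z \in B -> (indeg_in E T z)%:R <= K) ->
  2 * K + 2 < (#|S|)%:R ->
  (2 < #|[set y in S | (0 < indeg_in E T y)%N]|)%N /\
  (1 < #|[set x in T | (0 < outdeg_in E S x)%N]|)%N.
Proof.
move=> hl hn hdo hdi ha hab hst K0 hBS hBT hs.
have s3 : (3 <= #|S|)%N.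
  rewrite leqNgt; apply/negP => h.
  have : #|S|%:R <= 2 :> R by rewrite (ler_nat R #|S| 2); lia.
  lra.
split.
  have hN : (#|[set y in S | indeg_in E T y == 0%N]| * (#|B| + 1) <=
             2 * \sum_(z in B) outdeg_in E S z)%N.
    apply: (@leq_trans (#|[set y in S | indeg_in E T y == 0%N]| * (#|B| + 2 - #|A|))).
      by apply: leq_mul => //; lia.
    rewrite mul2n -addnn -dcount -big_split /=.
    apply: markov => y yS /eqP h0.
    have := hdi y; rewrite h0 addn0.
    have := indeg_le E A y; have := indeg_le1 hl yS; lia.
  have h3 : (#|[set y in S | indeg_in E T y == 0%N]| + 3 <= #|S|)%N.
    apply: real_step K0 hs _.
    apply: (le_trans (y := (2 * \sum_(z in B) outdeg_in E S z)%:R)); first by rewrite ler_nat; exact: hN.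
    by rewrite natrM -mulrA; apply: ler_wpM2l => //; apply: sumK.
  have := card_split S (fun y => 0 < indeg_in E T y)%N.
  rewrite (_ : [set y in S | ~~ _] = [set y in S | indeg_in E T y == 0%N]); first lia.
  by apply/setP => y; rewrite !inE lt0n negbK.
have [hts|hts] := eqVneq #|T| #|S|.
  have h3 : (#|[set x in T | outdeg_in E S x == 0%N]| + 3 <= #|T|)%N.
    apply: (@real_step _ #|B| #|T|) K0 _ _; first by rewrite hts.
    apply: (le_trans (y := (2 * \sum_(z in B) indeg_in E T z)%:R)).
      rewrite ler_nat.
      apply: (@leq_trans (#|[set x in T | outdeg_in E S x == 0%N]| * (#|B| + 2 - #|A|))).
        by apply: leq_mul => //; lia.
      rewrite mul2n -addnn (dcount E B T) -big_split /=.
      apply: markov => x xT /eqP h0.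
      have := hdo x; rewrite h0 addn0.
      have := outdeg_le E A x; have := outdeg_le1 hl xT; lia.
    by rewrite natrM -mulrA; apply: ler_wpM2l => //; apply: sumK.
  have := card_split T (fun x => 0 < outdeg_in E S x)%N.
  rewrite (_ : [set x in T | ~~ _] = [set x in T | outdeg_in E S x == 0%N]); first lia.
  by apply/setP => x; rewrite !inE lt0n negbK.
rewrite ltnNge; apply/negP => h1.
have hin : forall y, y \in S -> (indeg_in E T y <= 1)%N.
  move=> y yS; apply: leq_trans h1; apply: subset_leq_card; apply/subsetP => x.
  rewrite !inE => /andP[xT exy]; rewrite xT /=; apply/card_gt0P; exists y.
  by rewrite inE yS exy.
apply: (@real_step2 #|S| #|B| #|A| K) => //.
apply: (le_trans (y := (2 * \sum_(z in B) outdeg_in E S z)%:R)).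
  rewrite ler_nat.
  have := @markov V S predT (fun y => indeg_in E B y + indeg_in E B y)%N (#|B| + 1 - #|A|).
  rewrite (_ : [set y in S | predT y] = S); last by apply/setP => y; rewrite inE andbT.
  rewrite mul2n -addnn -dcount -big_split /=; apply => y yS _.
  have := hdi y; have := indeg_le E A y; have := indeg_le1 hl yS; have := hin y yS.
  move: hts; rewrite neq_ltn; lia.
by rewrite natrM -mulrA; apply: ler_wpM2l => //; apply: sumK.
Qed.


End Count.

Section Part.
Variable V : finType.

Lemma disjUl (X Y Z : {set V}) : [disjoint X & Z] -> [disjoint Y & Z] -> [disjoint X :|: Y & Z].
Proof. by rewrite !disjoints_subset => h1 h2; rewrite subUset h1 h2. Qed.
Lemma disjUr (X Y Z : {set V}) : [disjoint Z & X] -> [disjoint Z & Y] -> [disjoint Z & X :|: Y].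
Proof. by rewrite ![[disjoint Z & _]]disjoint_sym; apply: disjUl. Qed.
Lemma cardU_disj (X Y : {set V}) : [disjoint X & Y] -> #|X :|: Y| = (#|X| + #|Y|)%N.
Proof. by move=> d; rewrite cardsU (disjoint_setI0 d) cards0 subn0. Qed.

Lemma decomp (E : rel V) (A B S T : {set V}) x :
  A :|: B :|: S :|: T = setT ->
  (outdeg_in E setT x <= outdeg_in E (S :|: B) x + outdeg_in E (T :|: A) x)%N /\
  (indeg_in E setT x <= indeg_in E (S :|: B) x + indeg_in E (T :|: A) x)%N.
Proof.
move=> hc; have sub : setT \subset (S :|: B) :|: (T :|: A).
  by rewrite -hc; apply/subsetP => y; rewrite !inE; do ![case: (_ \in _)].
split.
  exact: leq_trans (outdeg_sub E x sub) (outdeg_U E _ _ x).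
exact: leq_trans (outdeg_sub (fun a b => E b a) x sub) (indeg_U E _ _ x).
Qed.
End Part.

Unset Implicit Arguments.
Local Open Scope ring_scope.

Lemma ar1 (n d p q s b t a : nat) : (n <= 2 * d)%N -> (d <= p + q)%N -> (p <= s + b)%N ->
  (q <= t + a)%N -> (n <= 2 * (a + b + s + t))%N.
Proof. lia. Qed.

Lemma ar2 (n d p q o1 o2 s b t a : nat) : (n <= 2 * d)%N -> (d <= p + q)%N ->
  (p <= o1 + o2)%N -> (o1 <= s - 1)%N -> (o2 <= b)%N -> (1 <= s)%N ->
  n = (a + b + s + t)%N -> (t + a + 2 <= s + b + 2 * q)%N.
Proof. lia. Qed.
Lemma ar3 (n d p q o1 o2 s b t a : nat) : (n <= 2 * d)%N -> (d <= p + q)%N ->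
  (q <= o1 + o2)%N -> (o1 <= t - 1)%N -> (o2 <= a)%N -> (1 <= t)%N ->
  n = (a + b + s + t)%N -> (s + b + 2 <= t + a + 2 * p)%N.
Proof. lia. Qed.

Lemma ar4 (s b t a q : nat) : (t + a + 2 <= s + b + 2 * q)%N -> (s + b < t + a)%N -> (1 < q)%N.
Proof. lia. Qed.
Lemma ar5 (s b t a q : nat) : (t + a + 2 <= s + b + 2 * q)%N -> (s + b = t + a)%N -> (0 < q)%N.
Proof. lia. Qed.

Lemma main_comb (R : realFieldType) (V : finType) (E : rel V) (A B S T : {set V}) (n : nat) (K : R) :
  loopless E -> A :|: B :|: S :|: T = setT ->
  [disjoint A & B] -> [disjoint A & S] -> [disjoint A & T] ->
  [disjoint B & S] -> [disjoint B & T] -> [disjoint S & T] ->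
  n = (#|A| + #|B| + #|S| + #|T|)%N ->
  (forall x, n <= 2 * outdeg_in E setT x)%N ->
  (forall x, n <= 2 * indeg_in E setT x)%N ->
  (#|A| <= #|B|)%N -> (#|S| <= #|T|)%N -> 0 <= K ->
  (forall z, z \in B -> (outdeg_in E S z)%:R <= K) ->
  (forall z, z \in B -> (indeg_in E T z)%:R <= K) ->
  (forall z, z \in A -> (indeg_in E S z)%:R <= K) ->
  (forall z, z \in A -> (outdeg_in E T z)%:R <= K) ->
  2 * K + 2 < #|S|%:R ->
    [/\ ((#|A| = #|B|) -> (#|A| <= 1)%N ->
          forall X1 Y1 X2 Y2 : {set V},
            (X1, Y1) \in [:: (S, T); (T, S)] ->
            (X2, Y2) \in [:: (S, T); (T, S)] ->
            two_disjoint_edges (edge_in E X1 Y1) (edge_in E X2 Y2)),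
        (A = set0 -> two_disjoint_edges (edge_in E T S) (edge_in E T S)),
        (#|A| = 1%N -> (2 <= #|B|)%N ->
          two_disjoint_edges (edge_in E T S) (edge_in E T S)) &
        two_disjoint_edges
          (fun x y => edge_in E S (T :|: A) x y || edge_in E T (S :|: B) x y)
          (fun x y => edge_in E S (T :|: A) x y || edge_in E T (S :|: B) x y)].
Proof.
move=> hl hc dAB dAS dAT dBS dBT dST hn hdo0 hdi0 hab hst hK0 hBS hBT hAS hAT hsK.
have hdo : forall x, (n <= 2 * (outdeg_in E A x + outdeg_in E B x + outdeg_in E S x + outdeg_in E T x))%N.
  move=> x; have [h1 _] := decomp E x hc.
  exact: ar1 (hdo0 x) h1 (outdeg_U E S B x) (outdeg_U E T A x).
have hdi : forall x, (n <= 2 * (indeg_in E A x + indeg_in E B x + indeg_in E S x + indeg_in E T x))%N.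
  move=> x; have [_ h1] := decomp E x hc.
  exact: ar1 (hdi0 x) h1 (indeg_U E S B x) (indeg_U E T A x).
have s3 : (3 <= #|S|)%N.
  case: (leqP 3 #|S|) => // h.
  have : #|S|%:R <= 2 :> R by rewrite (ler_nat R #|S| 2) -ltnS.
  lra.
have TS := TS_count hl hn hdo hdi _ hab hst hK0 hBS hBT hsK.
have dTS : [disjoint T & S] by rewrite disjoint_sym.
split.
- move=> hAB ha1 X1 Y1 X2 Y2.
  have [hTSh hTSt] := TS ha1.
  have hdo' : forall x, (n <= 2 * (outdeg_in (fun a b => E b a) B x + outdeg_in (fun a b => E b a) A x
      + outdeg_in (fun a b => E b a) S x + outdeg_in (fun a b => E b a) T x))%N.
    by move=> x; rewrite !outdeg_rev (addnC (indeg_in E B x)); exact: hdi x.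
  have hdi' : forall x, (n <= 2 * (indeg_in (fun a b => E b a) B x + indeg_in (fun a b => E b a) A x
      + indeg_in (fun a b => E b a) S x + indeg_in (fun a b => E b a) T x))%N.
    by move=> x; rewrite !indeg_rev (addnC (outdeg_in E B x)); exact: hdo x.
  have hAS' : forall z, z \in A -> (outdeg_in (fun a b => E b a) S z)%:R <= K.
    by move=> z zA; rewrite outdeg_rev; exact: hAS.
  have hAT' : forall z, z \in A -> (indeg_in (fun a b => E b a) T z)%:R <= K.
    by move=> z zA; rewrite indeg_rev; exact: hAT.
  have hn' : n = (#|B| + #|A| + #|S| + #|T|)%N by rewrite hn (addnC #|A|).
  have [hSTt hSTh] := TS_count (fun x => hl x) hn' hdo' hdi' (ltac:(by rewrite -hAB)) (ltac:(by rewrite hAB)) hst hK0 hAS' hAT' hsK.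
  have hSTt' : (2 < #|[set x in S | 0 < outdeg_in E T x]|)%N := hSTt.
  have hSTh' : (1 < #|[set y in T | 0 < indeg_in E S y]|)%N := hSTh.
  rewrite !inE => /orP[] /eqP [-> ->] /orP[] /eqP [-> ->].
  + by apply: bip => //; apply: ltnW.
  + by apply: tde_sym; apply: mixed.
  + by apply: mixed.
  + by apply: bip => //; apply: ltnW.
- move=> A0; have a0 : #|A| = 0%N by rewrite A0 cards0.
  have [h1 h2] := TS (ltac:(by rewrite a0)).
  by apply: bip => //; apply: ltnW.
- move=> a1 b2; have [h1 h2] := TS (ltac:(by rewrite a1)).
  by apply: bip => //; apply: ltnW.
- have dSA : [disjoint S & A] by rewrite disjoint_sym.
  have dTB : [disjoint T & B] by rewrite disjoint_sym.
  have dST' : [disjoint S & T :|: A] := disjUr dST dSA.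
  have dTS' : [disjoint T & S :|: B] := disjUr dTS dTB.
  have dT'S' : [disjoint T :|: A & S :|: B] := disjUl (disjUr dTS dTB) (disjUr dAS dAB).
  have t3 : (3 <= #|T|)%N by apply: leq_trans hst.
  have hSx : forall x, x \in S -> (#|T| + #|A| + 2 <= #|S| + #|B| + 2 * outdeg_in E (T :|: A) x)%N.
    move=> x xS; have [h1 _] := decomp E x hc.
    exact: ar2 (hdo0 x) h1 (outdeg_U E S B x) (outdeg_le1 hl xS) (outdeg_le E B x)
      (leq_trans _ s3) hn.
  have hTx : forall x, x \in T -> (#|S| + #|B| + 2 <= #|T| + #|A| + 2 * outdeg_in E (S :|: B) x)%N.
    move=> x xT; have [h1 _] := decomp E x hc.
    exact: ar3 (hdo0 x) h1 (outdeg_U E T A x) (outdeg_le1 hl xT) (outdeg_le E A x)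
      (leq_trans _ t3) hn.
  have hL : forall x y, edge_in E S (T :|: A) x y ->
    edge_in E S (T :|: A) x y || edge_in E T (S :|: B) x y by move=> x y ->.
  have hR : forall x y, edge_in E T (S :|: B) x y ->
    edge_in E S (T :|: A) x y || edge_in E T (S :|: B) x y by move=> x y ->; rewrite orbT.
  case: (ltngtP (#|S| + #|B|) (#|T| + #|A|)) => hcmp.
  + have /card_gt1P [x1 [x2 [x1S x2S n12]]] : (1 < #|S|)%N by apply: leq_trans s3.
    apply: (tde_mono hL hL); apply: (fan dST' x1S x2S n12).
      exact: ar4 (hSx x1 x1S) hcmp.
    apply: ltnW; exact: ar4 (hSx x2 x2S) hcmp.
  + have /card_gt1P [x1 [x2 [x1T x2T n12]]] : (1 < #|T|)%N by apply: leq_trans t3.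
    apply: (tde_mono hR hR); apply: (fan dTS' x1T x2T n12).
      exact: ar4 (hTx x1 x1T) hcmp.
    apply: ltnW; exact: ar4 (hTx x2 x2T) hcmp.
  + apply: (tde_mono hL hR); apply: mixed dST' dTS' dST dT'S' _ _.
      have c1 : (#|S| <= #|[set x in S | 0 < outdeg_in E (T :|: A) x]|)%N.
        apply: subset_leq_card; apply/subsetP => x xS; rewrite inE xS /=.
        exact: ar5 (hSx x xS) hcmp.
      by apply: leq_trans c1; apply: leq_trans s3.
    have c2 : (#|T| <= #|[set x in T | 0 < outdeg_in E (S :|: B) x]|)%N.
      apply: subset_leq_card; apply/subsetP => x xT; rewrite inE xT /=.
      exact: ar5 (hTx x xT) (esym hcmp).
    exact: leq_trans c2.
Qed.

Theorem proposition5p3 (R : realFieldType) :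
  exists eta0 : R, 0 < eta0 /\
  forall eta2 : R, 0 < eta2 -> eta2 <= eta0 ->
  exists eps4_0 : R, 0 < eps4_0 /\
  forall eps4 : R, 0 < eps4 -> eps4 <= eps4_0 ->
  exists eps3_0 : R, 0 < eps3_0 /\
  forall eps3 : R, 0 < eps3 -> eps3 <= eps3_0 ->
  exists n0 : nat, forall n : nat, (n0 <= n)%N ->
  forall (V : finType) (E : rel V) (A B S T : {set V}),
    #|V| = n -> loopless E ->
    min_semideg_ge E (n%:R / 2 : R) ->
    ST_conditions E n eps3 eta2 A B S T ->
    [/\ (* (i) *)
        ((#|A| = #|B|) -> (#|A| <= 1)%N ->
          forall X1 Y1 X2 Y2 : {set V},
            (X1, Y1) \in [:: (S, T); (T, S)] ->
            (X2, Y2) \in [:: (S, T); (T, S)] ->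
            two_disjoint_edges (edge_in E X1 Y1) (edge_in E X2 Y2)),
        (* (ii) *)
        (A = set0 -> two_disjoint_edges (edge_in E T S) (edge_in E T S)),
        (* (iii) *)
        (#|A| = 1%N -> (2 <= #|B|)%N ->
          two_disjoint_edges (edge_in E T S) (edge_in E T S)) &
        (* (iv) *)
        two_disjoint_edges
          (fun x y => edge_in E S (T :|: A) x y || edge_in E T (S :|: B) x y)
          (fun x y => edge_in E S (T :|: A) x y || edge_in E T (S :|: B) x y)].
Proof.
exists (1/100); split; first lra.
move=> eta2 he2 he2u; exists 1; split; first lra.
move=> eps4 _ _; exists (1/100); split; first lra.
move=> eps3 he3 he3u; exists 100%N => n hn100 V E A B S T hV hl hdeg hST.
move: hST; rewrite /ST_conditions; cbv zeta.
move=> [[hc hdisj] [hab [hst [[hs1 _] [_ [_ [_ [_ [_ [_ [hA hB]]]]]]]]]]].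
move: hdisj => /andP[dAB /andP[dAS /andP[dAT /andP[dBS /andP[dBT dST]]]]].
have hn : n = (#|A| + #|B| + #|S| + #|T|)%N.
  by rewrite -hV -cardsT -hc (cardU_disj (disjUl (disjUl dAT dBT) dST))
    (cardU_disj (disjUl dAS dBS)) (cardU_disj dAB).
have hdo0 : forall x, (n <= 2 * outdeg_in E setT x)%N.
  move=> x; have [h1 _] := hdeg x; rewrite -(ler_nat R) natrM.
  move: h1; move: (n%:R) (outdeg_in E setT x)%:R => u v h; lra.
have hdi0 : forall x, (n <= 2 * indeg_in E setT x)%N.
  move=> x; have [_ h1] := hdeg x; rewrite -(ler_nat R) natrM.
  move: h1; move: (n%:R) (indeg_in E setT x)%:R => u v h; lra.
have hK0 : 0 <= 3 * eta2 * n%:R by apply: mulr_ge0; [lra | ].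
have hsK : 2 * (3 * eta2 * n%:R) + 2 < #|S|%:R.
  have hh : (n <= 2 * n./2 + 1)%N.
    by have := odd_double_half n; rewrite -mul2n => e; rewrite -{1}e addnC leq_add2l leq_b1.
  have hhR : n%:R <= 2 * (n./2)%:R + 1 :> R.
    by move: hh; rewrite -(ler_nat R) natrD natrM.
  have hnR : 100 <= n%:R :> R by rewrite (ler_nat R 100 n).
  have p1 : 0 <= (1/100 - eps3) * n%:R :> R by apply: mulr_ge0; lra.
  have p2 : 0 <= (1/100 - eta2) * n%:R :> R by apply: mulr_ge0; lra.
  move: hs1 hhR hnR p1 p2 he3 he2.
  move: (n%:R) (n./2)%:R (#|S|%:R) => u w v; clear; lra.
refine (@main_comb R V E A B S T n (3 * eta2 * n%:R) hl hc dAB dAS dAT dBS dBT dST hn hdo0 hdi0 hab hst hK0 _ _ _ _ hsK).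
- by move=> z /hB [].
- by move=> z /hB [].
- by move=> z /hA [].
- by move=> z /hA [].
Qed.
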